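(* Let $k\geq 2$ be an integer and $G$ a graph. Suppose $f=u_1\dots u_{k-1}$ is a copy of $K_{k-1}$ in $G$ which is a copy of $K_{k-1}$ of two distinct $K_{k+1}$-components $C_1$ and $C_2$ of $G$. Let $uv$ and $wu_k$ be edges of $G$ such that the $k$-cliques $fu$ and $fv$ belong to $C_1$ and the $k$-cliques $fw$ and $fu_k$ belong to $C_2$. Then for each $i\in[k-1]$, the common neighbourhood $\Gamma(u_1,\dots,u_{i-1},u_{i+1},\dots,u_k,w,u,v)$ is an independent set.
   Context: A $K_{k+1}$-walk in $G$ is a sequence of copies of $K_k$ in which consecutive copies lie in a common copy of $K_{k+1}$; the endpoints are then $K_{k+1}$-connected, and the equivalence classes of copies of $K_k$ are the $K_{k+1}$-components. A copy of $K_{k-1}$ is a copy of $K_{k-1}$ of a component $C$ if it extends to a copy of $K_k$ in $C$. For a clique $f$ and vertex $x$ adjacent to all of $f$, $fx$ denotes the clique $f\cup\{x\}$. $\Gamma(x_1,\dots,x_s)$ denotes the set of common neighbours of $x_1,\dots,x_s$ in $G$. *)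

(* Defs.v *)
From mathcomp Require Import all_boot.
Set Implicit Arguments. Unset Strict Implicit. Unset Printing Implicit Defensive.

(* A (finite simple) graph: vertex type T : finType, adjacency G : rel T,
   assumed symmetric and irreflexive in the theorem. *)

Section Cliques.
Variables (T : finType) (G : rel T).

Definition is_clique (S : {set T}) : bool :=
  [forall x in S, forall y in S, (x != y) ==> G x y].

Definition kclique (k : nat) (S : {set T}) : bool :=
  is_clique S && (#|S| == k).

Definition kstep (k : nat) (A B : {set T}) : bool :=
  [&& kclique k A, kclique k B &
      [exists K : {set T}, [&& kclique k.+1 K, A \subset K & B \subset K]]].

Definition kconn (k : nat) (A B : {set T}) : bool := connect (kstep k) A B.

(* C is a K_(k+1)-component: an equivalence class of copies of K_k *)
Definition is_kcomponent (k : nat) (C : {set {set T}}) : Prop :=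
  exists2 A : {set T}, kclique k A & C = [set B | kconn k A B].

Definition clique_of_comp (k : nat) (f : {set T}) (C : {set {set T}}) : Prop :=
  kclique k.-1 f /\ exists2 x : T, kclique k (x |: f) & (x |: f) \in C.

Definition common_nbhd (S : {set T}) : {set T} :=
  [set x | [forall y in S, G x y]].

Definition independent (S : {set T}) : bool :=
  [forall x in S, forall y in S, ~~ G x y].

End Cliques.

(* Main.v *)
Require Import Defs.
From mathcomp Require Import all_boot.
Set Implicit Arguments. Unset Strict Implicit. Unset Printing Implicit Defensive.

Section Helpers.
Variables (T : finType) (G : rel T).
Hypothesis sG : symmetric G.
Hypothesis iG : irreflexive G.

Definition adj (a : T) (S : {set T}) := forall y, y \in S -> G a y.

Lemma adj_notin a S : adj a S -> a \notin S.
Proof. move=> h; apply/negP => aS; by have := h a aS; rewrite iG. Qed.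

Lemma adjU1 a b S : G a b -> adj a S -> adj a (b |: S).
Proof. by move=> ab aS y; rewrite in_setU1 => /orP[/eqP->|/aS]. Qed.

Lemma adj_sub a S (A : {set T}) : adj a S -> A \subset S -> adj a A.
Proof. by move=> aS /subsetP AS y /AS /aS. Qed.

Lemma cliqueP (S : {set T}) : is_clique G S -> forall p q, p \in S -> q \in S -> p != q -> G p q.
Proof.
move=> /forallP cS p q pS qS pq.
by move: (cS p); rewrite pS /= => /forallP /(_ q); rewrite qS pq.
Qed.

Lemma cliqueI (S : {set T}) : (forall p q, p \in S -> q \in S -> p != q -> G p q) -> is_clique G S.
Proof.
move=> h; apply/forallP=> p; apply/implyP => pS; apply/forallP => q;
apply/implyP => qS; apply/implyP; exact: h.
Qed.

Lemma cliqueU1 a S : is_clique G S -> adj a S -> is_clique G (a |: S).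
Proof.
move=> cS aS; apply: cliqueI => p q; rewrite !in_setU1.
move=> /orP[/eqP->|pS] /orP[/eqP->|qS]; rewrite ?eqxx //.
- by move=> _; exact: (aS q qS).
- by move=> _; rewrite sG; exact: (aS p pS).
- exact: (cliqueP cS).
Qed.

Lemma clique_sub S (A : {set T}) : is_clique G S -> A \subset S -> is_clique G A.
Proof.
move=> cS /subsetP AS; apply: cliqueI => p q /AS pS /AS qS; exact: (cliqueP cS).
Qed.

Lemma clique_adj a S : is_clique G (a |: S) -> a \notin S -> adj a S.
Proof.
move=> cS aS y yS; apply: (cliqueP cS); rewrite ?in_setU1 ?eqxx ?yS ?orbT //.
by apply: contraNneq aS => ->.
Qed.

Lemma card_add a (S : {set T}) : a \notin S -> #|a |: S| = #|S|.+1.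
Proof. by move=> h; rewrite cardsU1 h add1n. Qed.

Lemma kstep_of k K (A B : {set T}) : kclique G k.+1 K -> A \subset K -> B \subset K ->
  #|A| = k -> #|B| = k -> kstep G k A B.
Proof.
move=> /andP[cK hK] AK BK cA cB; apply/and3P; split.
- by rewrite /kclique (clique_sub cK AK) cA eqxx.
- by rewrite /kclique (clique_sub cK BK) cB eqxx.
- by apply/existsP; exists K; rewrite AK BK /kclique cK hK.
Qed.

Lemma kstep_sym k : symmetric (kstep G k).
Proof.
move=> A B; rewrite /kstep andbCA; congr [&& _, _ & _].
by apply/existsP/existsP => -[K /and3P[h1 h2 h3]]; exists K; rewrite h1 h2 h3.
Qed.

Lemma comp_kclique k C (X : {set T}) : is_kcomponent G k C -> X \in C -> kclique G k X.
Proof.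
case=> A hA ->; rewrite inE => /connectP[p hp ->] {C X}.
elim: p A hA hp => //= B p IH A hA /andP[hAB hp]; apply: IH hp.
by case/and3P: hAB.
Qed.

Lemma comp_eq k C (X Y : {set T}) : is_kcomponent G k C -> X \in C -> kconn G k X Y ->
  C = [set B | kconn G k Y B].
Proof.
case=> A hA -> {C}; rewrite inE => hAX hXY.
have hS := sym_connect_sym (@kstep_sym k).
apply/setP => B; rewrite !inE; apply/idP/idP => h.
- apply: connect_trans h; rewrite /kconn hS; exact: connect_trans hAX hXY.
- exact: connect_trans (connect_trans hAX hXY) h.
Qed.


Lemma notin_of_card k a (S : {set T}) : kclique G k.+1 (a |: S) -> #|S| = k -> a \notin S.
Proof.
move=> /andP[_ h] hS; apply/negP => aS.
by move: h; rewrite cardsU1 aS hS add0n eqn_leq ltnn andbF.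
Qed.

Lemma side n (f F' : {set T}) a b x y :
 F' \subset f -> #|F'| = n -> #|f| = n.+1 -> is_clique G f ->
 kclique G n.+2 (a |: f) -> kclique G n.+2 (b |: f) -> G a b -> G x y ->
 adj x F' -> adj y F' -> G x a -> G x b -> G y a -> G y b ->
 kconn G n.+2 (a |: f) (x |: (y |: F')).
Proof.
move=> Ff cF' cf clf ka kb ab xy xF yF xa xb ya yb.
have an := notin_of_card ka cf; have bn := notin_of_card kb cf.
have af : adj a f by apply: clique_adj => //; case/andP: ka.
have bf : adj b f by apply: clique_adj => //; case/andP: kb.
have aF := adj_sub af Ff; have bF := adj_sub bf Ff.
have ba : G b a by rewrite sG.
have yx : G y x by rewrite sG.
have caf : #|a |: f| = n.+2 by case/andP: ka => _ /eqP.
have caF : #|a |: F'| = n.+1 by rewrite card_add ?cF' //; exact: adj_notin.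
have bK1 : adj b (a |: f) by apply: adjU1.
have K1 : kclique G n.+3 (b |: (a |: f)).
  apply/andP; split; first by apply: cliqueU1 => //; case/andP: ka.
  by rewrite card_add ?caf // adj_notin.
have bK1' : adj b (a |: F') by apply: adjU1.
have cQ1 : #|b |: (a |: F')| = n.+2 by rewrite card_add ?caF // adj_notin.
have s1 : kstep G n.+2 (a |: f) (b |: (a |: F')).
  apply: (kstep_of K1) => //; first exact: subsetUr.
  by apply: setUS; apply: setUS.
have clQ1 : is_clique G (b |: (a |: F')).
  by case/andP: K1 => c _; apply: clique_sub c _; apply: setUS; apply: setUS.
have xQ1 : adj x (b |: (a |: F')) by do 2 apply: adjU1 => //.
have K2 : kclique G n.+3 (x |: (b |: (a |: F'))).
  apply/andP; split; first by apply: cliqueU1.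
  by rewrite card_add ?cQ1 // adj_notin.
have cQ2 : #|x |: (a |: F')| = n.+2 by rewrite card_add ?caF // adj_notin //; apply: adjU1.
have s2 : kstep G n.+2 (b |: (a |: F')) (x |: (a |: F')).
  apply: (kstep_of K2) => //; first exact: subsetUr.
  by apply: setUS; apply: subsetUr.
have clQ2 : is_clique G (x |: (a |: F')).
  by case/andP: K2 => c _; apply: clique_sub c _; apply: setUS; apply: subsetUr.
have yQ2 : adj y (x |: (a |: F')) by do 2 apply: adjU1 => //.
have K3 : kclique G n.+3 (y |: (x |: (a |: F'))).
  apply/andP; split; first by apply: cliqueU1.
  by rewrite card_add ?cQ2 // adj_notin.
have cQ3 : #|x |: (y |: F')| = n.+2.
  by rewrite !card_add ?cF' // ?adj_notin //; apply: adjU1.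
have s3 : kstep G n.+2 (x |: (a |: F')) (x |: (y |: F')).
  apply: (kstep_of K3) => //; first exact: subsetUr.
  apply/subsetP => z; rewrite !in_setU1.
  by case: (z == x); case: (z == y); case: (z == a); case: (z \in F'); rewrite ?orbT.
apply: connect_trans (connect1 s1) _.
apply: connect_trans (connect1 s2) _.
exact: connect1 s3.
Qed.

End Helpers.

Theorem lemma5p2 (T : finType) (G : rel T) (k : nat) (uu : 'I_k.-1 -> T)
    (uk u v w : T) (C1 C2 : {set {set T}}) :
  symmetric G -> irreflexive G -> 2 <= k ->
  let f := [set uu j | j : 'I_k.-1] in
  kclique G k.-1 f ->
  is_kcomponent G k C1 -> is_kcomponent G k C2 -> C1 <> C2 ->
  clique_of_comp G k f C1 -> clique_of_comp G k f C2 ->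
  G u v -> G w uk ->
  (u |: f) \in C1 -> (v |: f) \in C1 ->
  (w |: f) \in C2 -> (uk |: f) \in C2 ->
  forall i : 'I_k.-1,
    independent G (common_nbhd G
      ([set uu j | j : 'I_k.-1 & j != i] :|: [set uk; w; u; v])).
Proof.
case: k uu => [|[|n]] uu sG iG hk; [by [] | by [] |].
move=> f hf hC1 hC2 hne _ _ huv hwk hu hv hw huk i.
apply/forallP => x; apply/implyP => hx; apply/forallP => y; apply/implyP => hy.
apply/negP => hxy.
have nb z : z \in common_nbhd G ([set uu j | j : 'I_n.+1 & j != i] :|: [set uk; w; u; v]) ->
   forall t, t \in ([set uu j | j : 'I_n.+1 & j != i] :|: [set uk; w; u; v]) -> G z t.
  by rewrite inE => /forallP h t ht; move: (h t); rewrite ht.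
set F' := f :\ uu i.
have Ff : F' \subset f by apply: subsetDl.
have uif : uu i \in f by apply: imset_f.
case/andP: hf => clf /eqP cf.
have cF' : #|F'| = n by move: cf; rewrite (cardsD1 (uu i)) uif add1n => -[].
have adjF z : z \in common_nbhd G ([set uu j | j : 'I_n.+1 & j != i] :|: [set uk; w; u; v]) ->
   adj G z F'.
  move=> hz t; rewrite in_setD1 => /andP[tne /imsetP[j _ tj]]; apply: (nb _ hz).
  rewrite inE; apply/orP; left; apply/imsetP; exists j => //; rewrite inE.
  by apply: contraNneq tne => ji; rewrite tj ji.
have mem t : t \in [set uk; w; u; v] ->
   t \in ([set uu j | j : 'I_n.+1 & j != i] :|: [set uk; w; u; v]).
  by move=> ht; rewrite inE ht orbT.
have nx := nb _ hx; have ny := nb _ hy.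
have e1 := side sG iG Ff cF' cf clf (comp_kclique hC1 hu) (comp_kclique hC1 hv) huv hxy
  (adjF _ hx) (adjF _ hy) (nx _ (mem _ _)) (nx _ (mem _ _)) (ny _ (mem _ _)) (ny _ (mem _ _)).
have e2 := side sG iG Ff cF' cf clf (comp_kclique hC2 hw) (comp_kclique hC2 huk) hwk hxy
  (adjF _ hx) (adjF _ hy) (nx _ (mem _ _)) (nx _ (mem _ _)) (ny _ (mem _ _)) (ny _ (mem _ _)).
have I t : t \in [set uk; w; u; v] -> t \in [set uk; w; u; v] by [].
have mU : u \in [set uk; w; u; v] by rewrite !inE eqxx ?orbT.
have mV : v \in [set uk; w; u; v] by rewrite !inE eqxx ?orbT.
have mW : w \in [set uk; w; u; v] by rewrite !inE eqxx ?orbT.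
have mK : uk \in [set uk; w; u; v] by rewrite !inE eqxx ?orbT.
apply: hne; rewrite (comp_eq hC1 hu (e1 mU mV mU mV)).
by rewrite (comp_eq hC2 hw (e2 mW mK mW mK)).
Qed.
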